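(* Let $I_1,I_3>0$ and $\gamma,\delta\in\mathbb{R}$. Consider the time-dependent Hamiltonian (harmonic Lagrange top with time-dependent potential) on the phase space with coordinates Euler angles $(\phi,\theta,\psi)$, $\theta\in(0,\pi)$, and conjugate momenta $(p_\phi,p_\theta,p_\psi)$: \[ H=\frac{1}{2I_1}\Big(p_\theta^2+\frac{p_\phi^2+p_\psi^2-2p_\phi p_\psi\cos\theta}{\sin^2\theta}\Big)+\frac12\Big(\frac1{I_3}-\frac1{I_1}\Big)p_\psi^2+U(\cos\theta,t), \] \[ U(z,t)=-\frac{1}{I_1}\Big(\tfrac12\gamma e^{t/I_1}z+\tfrac14\delta e^{2t/I_1}z^2\Big). \] Along any solution of Hamilton's equations, $p_\phi$ and $p_\psi$ are constant, and the function $y(\tau):=\theta(I_1\tau)$ (i.e.\ $\tau=t/I_1$) satisfies exactly the trigonometric form of $P_V$, \[ \frac{d^2y}{d\tau^2}=-\frac{\partial V}{\partial y},\qquad V(y,\tau)=-\frac{\kappa_\infty^2}{2\sin^2(y/2)}-\frac{\kappa_0^2}{2\cos^2(y/2)}-\frac{\gamma e^{\tau}}{2}\cos y-\frac{\delta e^{2\tau}}{4}\cos^2 y, \] with parameters $\kappa_0^2=-\tfrac14(p_\phi+p_\psi)^2$ and $\kappa_\infty^2=-\tfrac14(p_\phi-p_\psi)^2$. Conversely, the equation of motion of $\theta$ for this Hamiltonian (with fixed values of $p_\phi,p_\psi$) is equivalent to this trigonometric $P_V$ equation.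
   Context: Hamilton's equations are $\dot q=\partial H/\partial p$, $\dot p=-\partial H/\partial q$ for each conjugate pair $(q,p)\in\{(\phi,p_\phi),(\theta,p_\theta),(\psi,p_\psi)\}$, with $\dot{}=d/dt$. Through $w=-\cot^2(y/2)$, $\zeta=e^\tau$, the trigonometric form of $P_V$ is equivalent to the fifth Painlevé equation with $\alpha=\kappa_\infty^2/2$, $\beta=-\kappa_0^2/2$. *)

(* Defs.v *)
From Stdlib Require Import Reals.
From Coquelicot Require Import Coquelicot.
Open Scope R_scope.

Definition U (I1 gamma delta z t : R) : R :=
  - (/ I1) * (/ 2 * gamma * exp (t / I1) * z + / 4 * delta * exp (2 * t / I1) * z ^ 2).

Definition Ham (I1 I3 gamma delta : R)
  (phi theta psi pphi ptheta ppsi t : R) : R :=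
  / (2 * I1) * (ptheta ^ 2 +
     (pphi ^ 2 + ppsi ^ 2 - 2 * pphi * ppsi * cos theta) / (sin theta) ^ 2)
  + / 2 * (/ I3 - / I1) * ppsi ^ 2 + U I1 gamma delta (cos theta) t.

Definition VPV (k0sq kinfsq gamma delta y tau : R) : R :=
  - kinfsq / (2 * (sin (y / 2)) ^ 2) - k0sq / (2 * (cos (y / 2)) ^ 2)
  - gamma * exp tau / 2 * cos y - delta * exp (2 * tau) / 4 * (cos y) ^ 2.

Definition in_open_int (a b : Rbar) (t : R) : Prop := Rbar_lt a t /\ Rbar_lt t b.

(* Partial derivatives of H are taken with Derive in the
   corresponding argument, all other arguments frozen at their current values. *)
Definition HamiltonSol (I1 I3 gamma delta : R) (a b : Rbar)
  (phi theta psi pphi ptheta ppsi : R -> R) : Prop :=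
  forall t, in_open_int a b t ->
    0 < theta t < PI /\
    let H := Ham I1 I3 gamma delta in
    is_derive phi t
      (Derive (fun x => H (phi t) (theta t) (psi t) x (ptheta t) (ppsi t) t) (pphi t)) /\
    is_derive theta t
      (Derive (fun x => H (phi t) (theta t) (psi t) (pphi t) x (ppsi t) t) (ptheta t)) /\
    is_derive psi t
      (Derive (fun x => H (phi t) (theta t) (psi t) (pphi t) (ptheta t) x t) (ppsi t)) /\
    is_derive pphi t
      (- Derive (fun x => H x (theta t) (psi t) (pphi t) (ptheta t) (ppsi t) t) (phi t)) /\
    is_derive ptheta t
      (- Derive (fun x => H (phi t) x (psi t) (pphi t) (ptheta t) (ppsi t) t) (theta t)) /\
    is_derive ppsi t
      (- Derive (fun x => H (phi t) (theta t) x (pphi t) (ptheta t) (ppsi t) t) (psi t)).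

(* The equations of motion of the (theta, p_theta) pair alone, with p_phi, p_psi
   frozen at constant values cphi, cpsi (phi, psi arbitrary: H does not depend on them). *)
Definition ThetaEqMotion (I1 I3 gamma delta : R) (a b : Rbar) (cphi cpsi : R)
  (phi psi theta ptheta : R -> R) : Prop :=
  forall t, in_open_int a b t ->
    let H := Ham I1 I3 gamma delta in
    is_derive theta t
      (Derive (fun x => H (phi t) (theta t) (psi t) cphi x cpsi t) (ptheta t)) /\
    is_derive ptheta t
      (- Derive (fun x => H (phi t) x (psi t) cphi (ptheta t) cpsi t) (theta t)).

Definition TrigPV (k0sq kinfsq gamma delta I1 : R) (a b : Rbar) (y : R -> R) : Prop :=
  forall tau, in_open_int a b (I1 * tau) ->
    ex_derive y tau /\
    is_derive_n y 2 tau
      (- Derive (fun u => VPV k0sq kinfsq gamma delta u tau) (y tau)).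

(* Main.v *)
Require Import Defs.
From Stdlib Require Import Reals Lra.
From Coquelicot Require Import Coquelicot.
Open Scope R_scope.

Lemma Ham_VPV I1 I3 g d p s cphi pt cpsi t tau x :
  0 < I1 -> 0 < I3 -> 0 < x < PI -> t = I1 * tau ->
  I1 * Ham I1 I3 g d p x s cphi pt cpsi t =
  VPV (- / 4 * (cphi + cpsi) ^ 2) (- / 4 * (cphi - cpsi) ^ 2) g d x tau
  + (pt ^ 2 / 2 + I1 * (/ 2 * (/ I3 - / I1) * cpsi ^ 2)).
Proof.
  intros HI HI3 [Hx0 Hx1] ->.
  assert (HS : 0 < sin (x/2)) by (apply sin_gt_0; lra).
  assert (HC : 0 < cos (x/2)) by (apply cos_gt_0; lra).
  assert (Hsx : sin x = 2 * sin (x/2) * cos (x/2)) by (replace x with (2 * (x/2)) at 1 by field; rewrite sin_2a; ring).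
  assert (Hcx : cos x = 1 - 2 * sin (x/2) ^ 2) by (replace x with (2 * (x/2)) at 1 by field; rewrite cos_2a_sin; ring).
  assert (Hc2 : cos (x/2) ^ 2 = 1 - sin (x/2) ^ 2) by (rewrite <- Rsqr_pow2, cos2, Rsqr_pow2; ring).
  assert (E1 : I1 * tau / I1 = tau) by (field; lra).
  assert (E2 : 2 * (I1 * tau) / I1 = 2 * tau) by (field; lra).
  unfold Ham, VPV, U. rewrite E1, E2.
  assert (Hsx2 : sin x ^ 2 = 4 * sin (x/2) ^ 2 * (1 - sin (x/2) ^2)) by (rewrite Hsx, <- Hc2; ring).
  rewrite Hsx2, Hc2, Hcx.
  assert (1 - sin (x/2) ^ 2 > 0) by (rewrite <- Hc2; nra).
  field. repeat split; try lra. all: nra.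
Qed.

Lemma loc_0PI th : 0 < th < PI -> locally th (fun x => 0 < x < PI).
Proof.
  intros H. apply (open_and _ _ (open_gt 0) (open_lt PI)). exact H.
Qed.

Lemma exd_VPV k0 ki g d th tau : 0 < th < PI -> ex_derive (fun u => VPV k0 ki g d u tau) th.
Proof.
  intros [H0 H1].
  assert (HS : 0 < sin (th/2)) by (apply sin_gt_0; lra).
  assert (HC : 0 < cos (th/2)) by (apply cos_gt_0; lra).
  unfold VPV. auto_derive. repeat split; nra.
Qed.

Lemma DH_DV I1 I3 g d p s cphi pt cpsi t tau th :
  0 < I1 -> 0 < I3 -> 0 < th < PI -> t = I1 * tau ->
  I1 * Derive (fun x => Ham I1 I3 g d p x s cphi pt cpsi t) th =
  Derive (fun u => VPV (- / 4 * (cphi + cpsi) ^ 2) (- / 4 * (cphi - cpsi) ^ 2) g d u tau) th.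
Proof.
  intros HI HI3 Hth Ht.
  set (V := fun u => VPV (- / 4 * (cphi + cpsi) ^ 2) (- / 4 * (cphi - cpsi) ^ 2) g d u tau).
  set (K := pt ^ 2 / 2 + I1 * (/ 2 * (/ I3 - / I1) * cpsi ^ 2)).
  rewrite (Derive_ext_loc _ (fun x => / I1 * (V x + K))).
  2:{ eapply filter_imp; [|apply (loc_0PI _ Hth)]. intros x Hx. simpl.
      unfold V, K. rewrite <- (Ham_VPV I1 I3 g d p s cphi pt cpsi t tau x HI HI3 Hx Ht). field. lra. }
  assert (HV : is_derive V th (Derive V th)) by (apply Derive_correct; apply exd_VPV; exact Hth).
  assert (E : Derive (fun x => / I1 * (V x + K)) th = / I1 * (Derive V th + 0)).
  { apply is_derive_unique. apply (is_derive_scal (fun x => V x + K)). apply (is_derive_plus V (fun _ => K)). exact HV. apply (is_derive_const K). }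
  etransitivity; [apply f_equal; exact E|]. field. lra.
Qed.

Lemma D_pt I1 I3 g d p th s cphi pt cpsi t : 0 < I1 ->
  Derive (fun x => Ham I1 I3 g d p th s cphi x cpsi t) pt = pt / I1.
Proof.
  intros HI. apply is_derive_unique. unfold Ham. auto_derive. lra. field. lra.
Qed.

Lemma D_phi I1 I3 g d th s cphi pt cpsi t p :
  Derive (fun x => Ham I1 I3 g d x th s cphi pt cpsi t) p = 0.
Proof. unfold Ham. apply Derive_const. Qed.

Lemma D_psi I1 I3 g d th p cphi pt cpsi t s :
  Derive (fun x => Ham I1 I3 g d p th x cphi pt cpsi t) s = 0.
Proof. unfold Ham. apply Derive_const. Qed.

Lemma int_open a b t : in_open_int a b t -> locally t (in_open_int a b).
Proof.
  intros [H1 H2]. apply filter_and.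
  - exact (open_Rbar_gt' t a H1).
  - exact (open_Rbar_lt' t b H2).
Qed.

Lemma int_conv a b x y z : in_open_int a b x -> in_open_int a b z -> x <= y <= z -> in_open_int a b y.
Proof.
  intros [H1 H2] [H3 H4] [H5 H6]. split.
  - eapply Rbar_lt_le_trans; [exact H1|]. simpl. exact H5.
  - eapply Rbar_le_lt_trans; [|exact H4]. simpl. exact H6.
Qed.

Lemma const_on a b f : (forall t, in_open_int a b t -> is_derive f t 0) ->
  exists c, forall t, in_open_int a b t -> f t = c.
Proof.
  intros Hd. destruct (Classical_Prop.classic (exists t0, in_open_int a b t0)) as [[t0 Ht0]|Hn].
  - exists (f t0). intros t Ht.
    assert (Hin : forall x, Rmin t0 t <= x <= Rmax t0 t -> in_open_int a b x).
    { intros x Hx. unfold Rmin, Rmax in Hx. destruct (Rle_dec t0 t).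
      + eapply int_conv; [exact Ht0|exact Ht|lra].
      + eapply int_conv; [exact Ht|exact Ht0|lra]. }
    destruct (MVT_gen f t0 t (fun _ => 0)) as [c [_ Hc]].
    + intros x Hx. apply Hd. apply Hin. lra.
    + intros x Hx. apply continuity_pt_filterlim. apply (@ex_derive_continuous R_AbsRing R_NormedModule f x).
      eexists. apply Hd. apply Hin. exact Hx.
    + lra.
  - exists 0. intros t Ht. exfalso. apply Hn. exists t. exact Ht.
Qed.

Lemma loc_tau a b I1 tau : in_open_int a b (I1 * tau) ->
  locally tau (fun u => in_open_int a b (I1 * u)).
Proof.
  intros H.
  assert (Hc : continuous (fun u : R => I1 * u) tau).
  { apply continuity_pt_filterlim. apply continuity_pt_mult.
    apply continuity_pt_const. intros x y; reflexivity. apply continuity_pt_id. }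
  apply Hc. apply int_open. exact H.
Qed.

Lemma chain_lin (f : R -> R) c u l : is_derive f (c * u) l ->
  is_derive (fun v => f (c * v)) u (c * l).
Proof.
  intros H.
  assert (Hl : is_derive (fun v : R => c * v) u c) by (auto_derive; auto; ring).
  pose proof (is_derive_comp f (fun v => c * v) u l c H Hl) as Hc.
  exact Hc.
Qed.

Lemma motion_PV I1 I3 g d a b cphi cpsi phi psi theta ptheta :
  0 < I1 -> 0 < I3 -> (forall t, in_open_int a b t -> 0 < theta t < PI) ->
  ThetaEqMotion I1 I3 g d a b cphi cpsi phi psi theta ptheta ->
  TrigPV (- / 4 * (cphi + cpsi) ^ 2) (- / 4 * (cphi - cpsi) ^ 2)
         g d I1 a b (fun tau => theta (I1 * tau)).
Proof.
  intros HI HI3 Hth HM.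
  assert (dy : forall u, in_open_int a b (I1 * u) ->
            is_derive (fun v => theta (I1 * v)) u (ptheta (I1 * u))).
  { intros u Hu. destruct (HM _ Hu) as [H1 _]. rewrite D_pt in H1 by exact HI.
    replace (ptheta (I1 * u)) with (I1 * (ptheta (I1 * u) / I1)) by (field; lra).
    apply chain_lin. exact H1. }
  intros tau Htau. split.
  - eexists. apply dy. exact Htau.
  - simpl.
    apply (is_derive_ext_loc (fun u => ptheta (I1 * u))).
    { eapply filter_imp; [|apply (loc_tau _ _ _ _ Htau)]. intros u Hu.
      symmetry. apply is_derive_unique. apply dy. exact Hu. }
    destruct (HM _ Htau) as [_ H2].
    rewrite <- (DH_DV I1 I3 g d (phi (I1 * tau)) (psi (I1 * tau)) cphi (ptheta (I1 * tau)) cpsi (I1 * tau) tau) by (auto; apply Hth; auto).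
    replace (- (I1 * Derive (fun x => Ham I1 I3 g d (phi (I1 * tau)) x (psi (I1 * tau)) cphi (ptheta (I1 * tau)) cpsi (I1 * tau)) (theta (I1 * tau))))
      with (I1 * - Derive (fun x => Ham I1 I3 g d (phi (I1 * tau)) x (psi (I1 * tau)) cphi (ptheta (I1 * tau)) cpsi (I1 * tau)) (theta (I1 * tau))) by ring.
    apply chain_lin. exact H2.
Qed.

Lemma PV_motion I1 I3 g d a b cphi cpsi phi psi theta :
  0 < I1 -> 0 < I3 -> (forall t, in_open_int a b t -> 0 < theta t < PI) ->
  TrigPV (- / 4 * (cphi + cpsi) ^ 2) (- / 4 * (cphi - cpsi) ^ 2)
         g d I1 a b (fun tau => theta (I1 * tau)) ->
  ThetaEqMotion I1 I3 g d a b cphi cpsi phi psi theta (fun t => I1 * Derive theta t).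
Proof.
  intros HI HI3 Hth HP.
  set (y := fun tau => theta (I1 * tau)).
  assert (Ey : forall v, y (/ I1 * v) = theta v) by (intros v; unfold y; f_equal; field; lra).
  assert (Hin : forall t, in_open_int a b t -> in_open_int a b (I1 * (/ I1 * t))).
  { intros t Ht. replace (I1 * (/ I1 * t)) with t by (field; lra). exact Ht. }
  assert (dth : forall t, in_open_int a b t ->
            is_derive theta t (/ I1 * Derive y (/ I1 * t))).
  { intros t Ht. destruct (HP _ (Hin _ Ht)) as [[l Hl] _].
    apply (is_derive_ext (fun v => y (/ I1 * v))). exact Ey.
    apply chain_lin. apply Derive_correct. eexists; exact Hl. }
  intros t Ht. simpl. split.
  - rewrite D_pt by exact HI.
    replace (I1 * Derive theta t / I1) with (Derive theta t) by (field; lra).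
    rewrite (is_derive_unique _ _ _ (dth _ Ht)). apply dth. exact Ht.
  - apply (is_derive_ext_loc (fun s => Derive y (/ I1 * s))).
    { eapply filter_imp; [|apply (int_open _ _ _ Ht)]. intros s Hs.
      rewrite (is_derive_unique _ _ _ (dth _ Hs)). rewrite <- Rmult_assoc, Rinv_r by lra. rewrite Rmult_1_l. reflexivity. }
    destruct (HP _ (Hin _ Ht)) as [_ H2].
    change (is_derive (Derive y) (/ I1 * t) (- Derive (fun u => VPV (- / 4 * (cphi + cpsi) ^ 2) (- / 4 * (cphi - cpsi) ^ 2) g d u (/ I1 * t)) (y (/ I1 * t)))) in H2.
    rewrite Ey in H2.
    replace (- Derive (fun x => Ham I1 I3 g d (phi t) x (psi t) cphi (I1 * Derive theta t) cpsi t) (theta t))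
      with (/ I1 * - (I1 * Derive (fun x => Ham I1 I3 g d (phi t) x (psi t) cphi (I1 * Derive theta t) cpsi t) (theta t))) by (field; lra).
    rewrite (DH_DV I1 I3 g d (phi t) (psi t) cphi (I1 * Derive theta t) cpsi t (/ I1 * t)) by (auto; field; lra).
    apply chain_lin. exact H2.
Qed.

Theorem theorem1 (I1 I3 gamma delta : R) (hI1 : 0 < I1) (hI3 : 0 < I3) (a b : Rbar) :
  (forall phi theta psi pphi ptheta ppsi : R -> R,
     HamiltonSol I1 I3 gamma delta a b phi theta psi pphi ptheta ppsi ->
     exists cphi cpsi : R,
       (forall t, in_open_int a b t -> pphi t = cphi /\ ppsi t = cpsi) /\
       TrigPV (- / 4 * (cphi + cpsi) ^ 2) (- / 4 * (cphi - cpsi) ^ 2)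
              gamma delta I1 a b (fun tau => theta (I1 * tau))) /\
  (forall (cphi cpsi : R) (phi psi theta : R -> R),
     (forall t, in_open_int a b t -> 0 < theta t < PI) ->
     ((exists ptheta : R -> R,
         ThetaEqMotion I1 I3 gamma delta a b cphi cpsi phi psi theta ptheta) <->
      TrigPV (- / 4 * (cphi + cpsi) ^ 2) (- / 4 * (cphi - cpsi) ^ 2)
             gamma delta I1 a b (fun tau => theta (I1 * tau)))).
Proof.
  split.
  - intros phi theta psi pphi ptheta ppsi HS.
    destruct (const_on a b pphi) as [cphi Hcphi].
    { intros t Ht. destruct (HS t Ht) as [_ [_ [_ [_ [H _]]]]].
      rewrite D_phi, Ropp_0 in H. exact H. }
    destruct (const_on a b ppsi) as [cpsi Hcpsi].
    { intros t Ht. destruct (HS t Ht) as [_ [_ [_ [_ [_ [_ H]]]]]].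
      rewrite D_psi, Ropp_0 in H. exact H. }
    exists cphi, cpsi. split.
    + intros t Ht. split; auto.
    + apply (motion_PV I1 I3 gamma delta a b cphi cpsi phi psi theta ptheta); auto.
      * intros t Ht. apply (HS t Ht).
      * intros t Ht. destruct (HS t Ht) as [_ [_ [H1 [_ [_ [H2 _]]]]]].
        rewrite (Hcphi t Ht), (Hcpsi t Ht) in H1, H2. split; assumption.
  - intros cphi cpsi phi psi theta Hth. split.
    + intros [ptheta HM]. eapply motion_PV; eauto.
    + intros HP. eexists. apply PV_motion; auto.
Qed.
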